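(* Let $t$ be a positive integer and let $G$ be a graph containing no copy of $\theta_{3,t}[2]$. Let $x,x',y,y'$ be distinct vertices of $G$ and let $R\subset N(y,y')\setminus\{x,x'\}$. Then the number of ordered pairs $(z,z')\in R^2$ of distinct vertices with $d(x,x',z,z')\ge 6t$ is at most $4t|R|$.
   Context: For vertices $v_1,\dots,v_k$ of a graph, $N(v_1,\dots,v_k)$ denotes their common neighbourhood and $d(v_1,\dots,v_k)=|N(v_1,\dots,v_k)|$. The theta graph $\theta_{3,t}$ is the union of $t$ paths of length $3$ sharing the same two endpoints and pairwise internally vertex-disjoint; $F[2]$ is obtained from a graph $F$ by replacing each vertex by an independent set of size $2$ and each edge by a copy of $K_{2,2}$ between the corresponding sets. *)

(* Defs.v *)
From mathcomp Require Import all_boot.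
Set Implicit Arguments. Unset Strict Implicit. Unset Printing Implicit Defensive.

Definition simple_graph (T : finType) (e : rel T) : Prop :=
  symmetric e /\ irreflexive e.

Definition common_nbhd (T : finType) (e : rel T) (vs : seq T) : {set T} :=
  [set w | all (fun v => e v w) vs].
Definition common_deg (T : finType) (e : rel T) (vs : seq T) : nat :=
  #|common_nbhd e vs|.

(* Vertices of theta_{3,t}: the two endpoints (inl false = a, inl true = b)
   and, for each path i < t, two internal vertices
   inr (i,false) (adjacent to a) and inr (i,true) (adjacent to b). *)
Definition theta_vert (t : nat) : finType := (bool + ('I_t * bool))%type.

Definition theta_adj0 (t : nat) (u v : theta_vert t) : bool :=
  match u, v with
  | inl false, inr (_, false) => true
  | inr (i, false), inr (j, true) => i == j
  | inr (_, true), inl true => true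
  | _, _ => false
  end.

Definition theta_adj (t : nat) (u v : theta_vert t) : bool :=
  theta_adj0 u v || theta_adj0 v u.

(* The blow-up F[2] for F = theta_{3,t}: each vertex w becomes (w,false),(w,true);
   each edge becomes a K_{2,2}. *)
Definition theta2_vert (t : nat) : finType := (theta_vert t * bool)%type.
Definition theta2_adj (t : nat) (p q : theta2_vert t) : bool :=
  theta_adj p.1 q.1.

Definition contains_theta2 (T : finType) (e : rel T) (t : nat) : Prop :=
  exists f : theta2_vert t -> T,
    injective f /\ forall p q, theta2_adj p q -> e (f p) (f q).

(* Main.v *)
Require Import Defs.
From mathcomp Require Import all_boot.
From mathcomp Require Import zify.

Lemma phase1 (T : finType) (P : {set T * T}) (R : {set T}) (x : T)
  (HP : forall p, p \in P -> [&& p.1 \in R, p.2 \in R & p.1 != p.2]) k :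
  (exists mz : seq T, [/\ size mz = 2 * k, uniq mz, {subset mz <= R} &
      forall i, i < k -> (nth x mz (2 * i), nth x mz (2 * i).+1) \in P])
  \/ (exists S : {set T}, #|S| + 2 <= 2 * k /\
        forall p, p \in P -> (p.1 \in S) || (p.2 \in S)).
Proof.
elim: k => [|k [[mz [Hs Hu Hsub Hp]]|[S [HS Hc]]]].
- by left; exists [::]; split.
- case: (pickP (fun p : T * T => [&& p \in P, p.1 \notin mz & p.2 \notin mz]))
    => [[a b] /and3P [Pp n1 n2]|none].
  + left; exists (mz ++ [:: a; b]).
    have /and3P [Ra Rb ab] := HP _ Pp.
    rewrite /= in Ra Rb ab n1 n2.
    split.
    * by rewrite size_cat Hs /=; lia.
    * rewrite cat_uniq Hu /= !inE negb_or; idtac.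
      by rewrite orbF n1 n2 ab.

    * move=> u; rewrite mem_cat !inE => /orP [/Hsub //|/orP [/eqP->|/eqP->]] //.
    * move=> i Hi; rewrite !nth_cat Hs.
      case: (ltnP i k) => Hik.
      -- rewrite ifT; last by lia. rewrite ifT; last by lia. exact: Hp.
      -- have -> : i = k by lia.
         rewrite ltnn ifF; last by lia.
         by rewrite subnn -addn1 addKn.
  + right; exists [set u in mz]; split.
    * rewrite cardsE. apply: leq_trans (leq_add (card_size mz) (leqnn 2)) _; rewrite Hs; lia.
    * move=> [a b] Pp; have := none (a, b); rewrite /= Pp /= !inE.
      by case: (a \in mz); case: (b \in mz).
- by right; exists S; split => //; lia.
Qed.

Lemma phase2 (T : finType) (e : rel T) (t : nat) (Hirr : irreflexive e)
  (x x' y y' : T) (mz : seq T) (Hs : size mz = 2 * t)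
  (Hbase : uniq ([:: x; x'; y; y'] ++ mz))
  (Hd : forall i, i < t ->
     6 * t <= common_deg e [:: x; x'; nth x mz (2 * i); nth x mz (2 * i).+1]) j :
  j <= t -> exists ws : seq T, [/\ size ws = 2 * j,
     uniq ([:: x; x'; y; y'] ++ mz ++ ws) &
     forall i, i < j ->
       (nth x ws (2 * i) \in common_nbhd e [:: x; x'; nth x mz (2 * i); nth x mz (2 * i).+1])
    && (nth x ws (2 * i).+1 \in common_nbhd e [:: x; x'; nth x mz (2 * i); nth x mz (2 * i).+1])].
Proof.
elim: j => [|j IH] Hjt.
  by exists [::]; split => //; rewrite cats0.
have Hj : j < t by lia.
have [ws [Hws Hu Hw]] := IH (ltnW Hjt).
set z := nth x mz (2 * j); set z' := nth x mz (2 * j).+1.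
set N := common_nbhd e [:: x; x'; z; z'].
set L := [:: x; x'; y; y'] ++ mz ++ ws.
have HN : 6 * t <= #|N| := Hd j Hj.
move: (Hbase); rewrite cat_uniq => /and3P [Hb1 Hb2 Hb3].
have xx' : x != x' by move: Hb1; rewrite /= !inE; case: (x == x').
have xmz : x \notin mz.
  apply/negP => H; move/hasPn: Hb2 => /(_ x H); by rewrite !inE eqxx.
have x'mz : x' \notin mz.
  apply/negP => H; move/hasPn: Hb2 => /(_ x' H); by rewrite !inE eqxx orbT.
have zin : z \in mz by apply: mem_nth; rewrite Hs; clear -Hj; lia.
have z'in : z' \in mz by apply: mem_nth; rewrite Hs; clear -Hj; lia.
have zz' : z != z'.
  rewrite /z /z' nth_uniq //.
  - by apply/eqP; clear; lia.
  - by rewrite Hs; clear -Hj; lia.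
  - by rewrite Hs; clear -Hj; lia.
set B := [set u in [:: x; x'; z; z']].
have HB : #|B| = 4.
  rewrite cardsE; apply/card_uniqP => /=.
  rewrite !inE !negb_or xx' zz' andbT /=.
  have -> : x != z by apply/eqP => E; move: xmz; rewrite E zin.
  have -> : x != z' by apply/eqP => E; move: xmz; rewrite E z'in.
  have -> : x' != z by apply/eqP => E; move: x'mz; rewrite E zin.
  by have -> : x' != z' by apply/eqP => E; move: x'mz; rewrite E z'in.
set A := [set u in L].
have BA : B \subset A.
  apply/subsetP => u; rewrite !inE /L /= mem_cat.
  by case/or4P => /eqP ->; rewrite ?eqxx ?zin ?z'in ?orbT.
have HA : #|A| <= 4 + 2 * t + 2 * j.
  rewrite cardsE; apply: leq_trans (card_size _) _.
  by rewrite /L !size_cat Hs Hws /=; clear; lia.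
have NAB : N :&: A \subset A :\: B.
  apply/subsetP => u; rewrite !inE /= => /andP [Hn ->]; rewrite andbT.
  move: Hn => /and4P [e1 e2 e3 /andP [e4 _]].
  apply/negP => /or4P [] /eqP E.
  - by move: e1; rewrite E Hirr.
  - by move: e2; rewrite E Hirr.
  - by move: e3; rewrite E Hirr.
  - by move: e4; rewrite E Hirr.
have H2 : 1 < #|N :\: A|.
  have h1 := cardsID A N.
  have h2 := subset_leq_card NAB.
  rewrite cardsD (setIidPr BA) HB in h2.
  move: h1 h2 HN HA Hj; move: #|N :&: A| #|N :\: A| #|N| #|A| => a1 a2 a3 a4.
  clear; lia.
have /card_gt1P [a [b [Ha Hb ab]]] := H2.
move: Ha Hb; rewrite !inE => /andP [aL aN] /andP [bL bN].
exists (ws ++ [:: a; b]); split.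
- by rewrite size_cat Hws /=; clear; lia.
- rewrite !catA cat_uniq -!catA Hu /=. rewrite !inE orbF negb_or aL bL /=.
  by rewrite ab.
- move=> i Hi; rewrite !nth_cat Hws.
  case: (ltnP i j) => Hij.
  + rewrite ifT; last by clear -Hij; lia. rewrite ifT; last by clear -Hij; lia. exact: Hw.
  + have -> : i = j by clear -Hi Hij; lia.
    rewrite ltnn ifF; last by rewrite ltnNge leqnSn.
    by rewrite subnn subSnn /= !inE aN bN.
Qed.

Definition code (t : nat) (v : theta2_vert t) : nat :=
  match v.1 with
  | inl c => 2 * c + v.2
  | inr (i, c) => 4 + 2 * i + 2 * t * (~~ c) + v.2
  end.
Arguments code {t} v.

Lemma code_lt t (v : theta2_vert t) : code v < 4 + 4 * t.
Proof.
case: v => [[c|[i c]] b]; rewrite /code /=.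
  by case: c; case: b.
have := ltn_ord i; case: c; case: b => /=; lia.
Qed.

Lemma code_inj t : injective (@code t).
Proof.
move=> [[c|[i c]] b] [[c'|[i' c']] b']; rewrite /code /=.
- by case: c; case: b; case: c'; case: b'.
- have := ltn_ord i'; case: c; case: b; case: c'; case: b' => /=; lia.
- have := ltn_ord i; case: c; case: b; case: c'; case: b' => /=; lia.
- have := ltn_ord i; have := ltn_ord i'.
  case: c; case: b; case: c'; case: b' => /= h1 h2 E; try (exfalso; lia).
  all: have Hii : i = i' by apply: val_inj => /=; lia.
  all: by rewrite Hii.
Qed.

Theorem lemma2p2 (T : finType) (e : rel T) (t : nat)
  (Hg : simple_graph e) (Ht : 0 < t)
  (Hfree : ~ contains_theta2 e t)
  (x x' y y' : T) (Hdist : uniq [:: x; x'; y; y'])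
  (R : {set T}) (HR : R \subset common_nbhd e [:: y; y'] :\: [set x; x']) :
  #|[set p : T * T | [&& p.1 \in R, p.2 \in R, p.1 != p.2 &
                        6 * t <= common_deg e [:: x; x'; p.1; p.2]]]|
    <= 4 * t * #|R|.
Proof.
case: Hg => Hsym Hirr.
set P := [set p : T * T | _].
have HRu : forall u, u \in R -> [&& e y u, e y' u, u != x & u != x'].
  move=> u /(subsetP HR); rewrite !inE /= negb_or andbT => /and3P [/andP [-> ->] -> ->].
  done.
have HP : forall p, p \in P -> [&& p.1 \in R, p.2 \in R & p.1 != p.2].
  by move=> p; rewrite inE => /and4P [-> -> -> _].
case: (@phase1 _ P R x HP t) => [[mz [Hs Hu Hsub Hp]] | [S [HS Hc]]]; last first.
  have sub : P \subset setX S R :|: setX R S.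
    apply/subsetP => -[a b] Pp.
    have := Hc _ Pp; have /and3P [Ra Rb _] := HP _ Pp.
    rewrite /= !inE /= in Ra Rb * => /orP [->|->]; by rewrite ?Ra ?Rb ?orbT.
  apply: leq_trans (subset_leq_card sub) _.
  rewrite cardsU; apply: leq_trans (leq_subr _ _) _; rewrite !cardsX.
  move: HS; move: #|S| #|R| => s r; clear; nia.
exfalso; apply: Hfree.
have Hbase : uniq ([:: x; x'; y; y'] ++ mz).
  rewrite cat_uniq Hdist Hu andbT /=; apply/hasPn => u /Hsub /HRu /and4P [h1 h2 h3 h4].
  rewrite !inE !negb_or h3 h4 /=; apply/andP; split; apply/eqP => E.
  - by move: h1; rewrite E Hirr.
  - by move: h2; rewrite E Hirr.
have Hd : forall i, i < t ->
     6 * t <= common_deg e [:: x; x'; nth x mz (2 * i); nth x mz (2 * i).+1].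
  by move=> i /Hp; rewrite inE => /and4P [_ _ _ ->].
have [ws [Hws Hu' Hw]] := @phase2 T e t Hirr x x' y y' mz Hs Hbase Hd t (leqnn t).
set L := [:: x; x'; y; y'] ++ mz ++ ws.
have HL : size L = 4 + 4 * t by rewrite /L !size_cat Hs Hws /=; clear; lia.
pose f := fun v : theta2_vert t => nth x L (code v).
exists f; split.
  move=> v w /eqP; rewrite /f nth_uniq ?HL ?code_lt //.
  by move/eqP/code_inj.
have fx : forall b, f (@inl bool ('I_t * bool) false, b) = if b then x' else x by case.
have fy : forall b, f (@inl bool ('I_t * bool) true, b) = if b then y' else y by case.
have fz : forall (i : 'I_t) (b : bool), f (@inr bool ('I_t * bool) (i, true), b) = nth x mz (2 * i + b).
  move=> i b; rewrite /f /code /= muln0 addn0.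
  rewrite add0n nth_cat Hs ifT //; have := ltn_ord i; case: b; clear; lia.
have fw : forall (i : 'I_t) (b : bool), f (@inr bool ('I_t * bool) (i, false), b) = nth x ws (2 * i + b).
  move=> i b; rewrite /f /code /= muln1.
  rewrite (_ : 0 + 2 * i + 2 * t + b = 2 * t + (2 * i + b)); last by clear; lia.
  by rewrite nth_cat Hs ltnNge leq_addr /= addKn.
have zR : forall (i : 'I_t) (b : bool), nth x mz (2 * i + b) \in R.
  move=> i b; have /HP /and3P [h1 h2 _] := Hp i (ltn_ord i).
  by case: b; rewrite ?addn0 ?addn1.
have wN : forall (i : 'I_t) (b c : bool),
    e (if c then x' else x) (nth x ws (2 * i + b)) &&
    e (nth x mz (2 * i + c)) (nth x ws (2 * i + b)).
  move=> i b c; have /andP [h1 h2] := Hw i (ltn_ord i).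
  move: h1 h2; rewrite !inE /= => /and4P [a1 a2 a3 /andP [a4 _]] /and4P [b1 b2 b3 /andP [b4 _]].
  by case: b; case: c; rewrite ?addn0 ?addn1 /= ?a1 ?a2 ?a3 ?a4 ?b1 ?b2 ?b3 ?b4.
have adj0 : forall u v b c, theta_adj0 u v -> e (f (u, b)) (f (v, c)).
  move=> [[]|[i []]] [[]|[j []]] b c //= H.
  - by rewrite (fw j c) (fx b); case/andP: (wN j c b).
  - rewrite fz fy; have /HRu /and4P [h1 h2 _ _] := zR i b.
    by case: c; rewrite Hsym.
  - by rewrite fw fz Hsym; move/eqP: H => ->; case/andP: (wN j b c).
move=> [u b] [v c]; rewrite /theta2_adj /theta_adj /= => /orP [H|H].
  exact: adj0.
by rewrite Hsym; apply: adj0.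
Qed.
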